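(* For every ProbNetKAT program $p$, every $n\in\mathbb{N}$ and all $a,b,b'\subseteq\mathsf{Pk}$, \[ \sum_{a'\subseteq\mathsf{Pk}} [b'=a'\cup b]\cdot \mathcal{B}[\![p^{(n)}]\!]_{a,a'} = \sum_{a'\subseteq\mathsf{Pk}} \big(\mathcal{S}[\![p]\!]^{n+1}\big)_{(a,b),(a',b')}. \]
   Context: $\mathsf{Pk}$ is a finite set of packets (records of finitely many fields with finitely many values); $[\varphi]$ is the Iverson bracket. ProbNetKAT programs are built from predicates $\mathsf{false},\mathsf{true}, f=n$, their negations/disjunctions/conjunctions, assignments $f\leftarrow n$, union $p\,\&\,q$, sequencing $p;q$, probabilistic choice $p\oplus_r q$ and iteration $p^*$. $p^{(0)}=\mathsf{true}$, $p^{(n+1)}=\mathsf{true}\,\&\,(p;p^{(n)})$. The matrix semantics $\mathcal{B}[\![p]\!]\in[0,1]^{2^{\mathsf{Pk}}\times 2^{\mathsf{Pk}}}$: $\mathcal{B}[\![\mathsf{false}]\!]_{ab}=[b=\emptyset]$; $\mathcal{B}[\![\mathsf{true}]\!]_{ab}=[a=b]$; $\mathcal{B}[\![f=n]\!]_{ab}=[b=\{\pi\in a:\pi.f=n\}]$; $\mathcal{B}[\![\neg t]\!]_{ab}=[b\subseteq a]\mathcal{B}[\![t]\!]_{a,a-b}$; $\mathcal{B}[\![f\leftarrow n]\!]_{ab}=[b=\{\pi[f:=n]:\pi\in a\}]$; $\mathcal{B}[\![p\,\&\,q]\!]_{ab}=\sum_{c,d}[c\cup d=b]\mathcal{B}[\![p]\!]_{ac}\mathcal{B}[\![q]\!]_{ad}$;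 $\mathcal{B}[\![p;q]\!]=\mathcal{B}[\![p]\!]\mathcal{B}[\![q]\!]$; $\mathcal{B}[\![p\oplus_r q]\!]=r\mathcal{B}[\![p]\!]+(1-r)\mathcal{B}[\![q]\!]$; $\mathcal{B}[\![p^*]\!]_{ab}=\lim_n\mathcal{B}[\![p^{(n)}]\!]_{ab}$. The small-step matrix is $\mathcal{S}[\![p]\!]_{(a,b),(a',b')}=[b'=b\cup a]\,\mathcal{B}[\![p]\!]_{a,a'}$. *)

(* Defs.v *)
From HB Require Import structures.
From mathcomp Require Import all_boot all_order all_algebra.
From mathcomp Require Import all_classical all_reals all_analysis.
Set Implicit Arguments. Unset Strict Implicit. Unset Printing Implicit Defensive.
Import Order.TTheory GRing.Theory Num.Theory.
Import numFieldNormedType.Exports.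
Local Open Scope ring_scope.

Section ProbNetKAT.
Variables (F V : finType) (R : realType).

Definition packet := {ffun F -> V}.

Definition upd (pi : packet) (f : F) (n : V) : packet :=
  [ffun g => if g == f then n else pi g].

Inductive test :=
| PFalse | PTrue | PTest of F & V
| PNeg of test | POr of test & test | PAnd of test & test.

Inductive prog :=
| Pred of test
| Assign of F & V
| Union of prog & prog
| Seq of prog & prog
| Choice of prog & R & prog
| Star of prog.

Fixpoint wf (p : prog) : Prop :=
  match p with
  | Pred _ | Assign _ _ => True
  | Union p q | Seq p q => wf p /\ wf q
  | Choice p r q => 0 <= r <= 1 /\ wf p /\ wf q
  | Star p => wf p
  end.

Fixpoint ppow (p : prog) (n : nat) : prog :=
  match n with
  | 0 => Pred PTrue
  | n'.+1 => Union (Pred PTrue) (Seq p (ppow p n'))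
  end.

Definition mat (T : finType) := T -> T -> R.

Definition mmul (T : finType) (M N : mat T) : mat T :=
  fun a b => \sum_(c : T) M a c * N c b.

Definition mid (T : finType) : mat T := fun a b => (a == b)%:R.

Fixpoint mpow (T : finType) (M : mat T) (n : nat) : mat T :=
  match n with
  | 0 => @mid T
  | n'.+1 => mmul M (mpow M n')
  end.

Notation St := {set packet}.

Definition Bfalse : mat St := fun a b => (b == finset.set0)%:R.
Definition Btrue : mat St := @mid St.
Definition Btest (f : F) (n : V) : mat St :=
  fun a b => (b == [set pi in a | pi f == n])%:R.
Definition Bneg (M : mat St) : mat St :=
  fun a b => (b \subset a)%:R * M a (a :\: b).
Definition Bassign (f : F) (n : V) : mat St :=
  fun a b => (b == [set upd pi f n | pi in a])%:R.
Definition Bunion (M N : mat St) : mat St :=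
  fun a b => \sum_(c : St) \sum_(d : St) (c :|: d == b)%:R * M a c * N a d.
Definition Bchoice (M : mat St) (r : R) (N : mat St) : mat St :=
  fun a b => r * M a b + (1 - r) * N a b.

(* B[[p^(n)]] computed from B[[p]] (literal unfolding of p^(n)) *)
Fixpoint Bpow (M : mat St) (n : nat) : mat St :=
  match n with
  | 0 => Btrue
  | n'.+1 => Bunion Btrue (mmul M (Bpow M n'))
  end.

Definition Bstar (M : mat St) : mat St :=
  fun a b => limn (fun n => Bpow M n a b).

(* READING: disjunction of testicates is interpreted as union (&),
   conjunction as sequencing (;), as usual in ProbNetKAT. *)
Fixpoint Bpred (t : test) : mat St :=
  match t with
  | PFalse => Bfalse
  | PTrue => Btrue
  | PTest f n => Btest f n
  | PNeg t => Bneg (Bpred t)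
  | POr t u => Bunion (Bpred t) (Bpred u)
  | PAnd t u => mmul (Bpred t) (Bpred u)
  end.

Fixpoint B (p : prog) : mat St :=
  match p with
  | Pred t => Bpred t
  | Assign f n => Bassign f n
  | Union p q => Bunion (B p) (B q)
  | Seq p q => mmul (B p) (B q)
  | Choice p r q => Bchoice (B p) r (B q)
  | Star p => Bstar (B p)
  end.

Definition S (p : prog) : mat (St * St)%type :=
  fun x y => (y.2 == x.2 :|: x.1)%:R * B p x.1 y.1.

End ProbNetKAT.

(* Main.v *)
Require Import Defs.
From HB Require Import structures.
From mathcomp Require Import all_boot all_order all_algebra.
From mathcomp Require Import all_classical all_reals all_analysis.
Import Order.TTheory GRing.Theory Num.Theory.
Import numFieldNormedType.Exports.
Local Open Scope ring_scope.

Section Proofs.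
Variables (F V : finType) (R : realType).
Local Notation St := {set packet F V}.
Local Notation M_ := (mat R St).

Definition nonneg (M : M_) := forall a b : St, 0 <= M a b.
Definition rows1 (M : M_) := forall a : St, \sum_(b : St) M a b = 1.
Definition supp (M : M_) := forall a b : St, ~~ (b \subset a) -> M a b = 0.

Lemma sum_ind (x : St) : \sum_(b : St) (b == x)%:R = 1 :> R.
Proof. by rewrite (bigD1 x) //= eqxx big1 ?addr0 // => b /negbTE ->. Qed.

Lemma sum_ind' (x : St) : \sum_(b : St) (x == b)%:R = 1 :> R.
Proof. by under eq_bigr do rewrite eq_sym; exact: sum_ind. Qed.

Lemma true_nn : nonneg (Btrue R (F:=F) (V:=V)).
Proof. by move=> a b; rewrite /Btrue /mid ler0n. Qed.
Lemma true_r1 : rows1 (Btrue R (F:=F) (V:=V)).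
Proof. by move=> a; rewrite /Btrue /mid sum_ind'. Qed.

Lemma union_nn (M N : M_) : nonneg M -> nonneg N -> nonneg (Bunion M N).
Proof.
move=> hM hN a b; rewrite /Bunion; apply: sumr_ge0 => c _; apply: sumr_ge0 => d _.
by rewrite mulr_ge0 ?mulr_ge0 ?ler0n.
Qed.

Lemma union_r1 (M N : M_) : rows1 M -> rows1 N -> rows1 (Bunion M N).
Proof.
move=> hM hN a; rewrite /Bunion exchange_big /=.
transitivity (\sum_(c : St) \sum_(d : St) M a c * N a d).
  apply: eq_bigr => c _; rewrite exchange_big /=; apply: eq_bigr => d _.
  by rewrite -!big_distrl /= sum_ind' mul1r.
under eq_bigr do rewrite -big_distrr /= hN mulr1.
exact: hM.
Qed.

Lemma mmul_nn (M N : M_) : nonneg M -> nonneg N -> nonneg (mmul M N).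
Proof. by move=> hM hN a b; apply: sumr_ge0 => c _; rewrite mulr_ge0. Qed.

Lemma mmul_r1 (M N : M_) : rows1 M -> rows1 N -> rows1 (mmul M N).
Proof.
move=> hM hN a; rewrite /mmul exchange_big /=.
under eq_bigr do rewrite -big_distrr /= hN mulr1.
exact: hM.
Qed.

Lemma choice_nn (M N : M_) r : 0 <= r <= 1 -> nonneg M -> nonneg N -> nonneg (Bchoice M r N).
Proof.
move=> /andP[r0 r1] hM hN a b; rewrite /Bchoice.
by rewrite addr_ge0 // mulr_ge0 // subr_ge0.
Qed.

Lemma choice_r1 (M N : M_) r : rows1 M -> rows1 N -> rows1 (Bchoice M r N).
Proof.
move=> hM hN a; rewrite /Bchoice big_split /= -!big_distrr /= hM hN.
by rewrite !mulr1 addrC subrK.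
Qed.


Lemma ind_nn (f : St -> St -> St) : nonneg (fun a b => (b == f a b)%:R).
Proof. by move=> a b; rewrite ler0n. Qed.

Lemma false_r1 : rows1 (Bfalse R (F:=F) (V:=V)).
Proof. by move=> a; rewrite /Bfalse sum_ind. Qed.
Lemma test_r1 f n : rows1 (Btest R f n).
Proof. by move=> a; rewrite /Btest sum_ind. Qed.
Lemma assign_r1 f n : rows1 (Bassign R f n).
Proof. by move=> a; rewrite /Bassign sum_ind. Qed.

Lemma false_supp : supp (Bfalse R (F:=F) (V:=V)).
Proof. by move=> a b; rewrite /Bfalse; case: eqP => // ->; rewrite finset.sub0set. Qed.
Lemma true_supp : supp (Btrue R (F:=F) (V:=V)).
Proof. by move=> a b; rewrite /Btrue /mid; case: eqP => // ->; rewrite subxx. Qed.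
Lemma test_supp f n : supp (Btest R f n).
Proof.
move=> a b; rewrite /Btest; case: eqP => // -> /negP[].
by apply/fintype.subsetP => x; rewrite inE => /andP[].
Qed.

Definition symd (a b : St) : St := (b :\: a) :|: (a :\: b).
Lemma symdK a : involutive (symd a).
Proof.
move=> b; apply/setP => x; rewrite !inE.
by case: (x \in a); case: (x \in b).
Qed.
Lemma symd_sub a c : (symd a c \subset a) = (c \subset a).
Proof.
apply/fintype.subsetP/fintype.subsetP => H x.
  move=> xc; case xa: (x \in a) => //.
  by have := H x; rewrite !inE xc xa /=; apply.
by rewrite !inE => /orP[/andP[] xa /H xa'|/andP[]//]; rewrite xa' in xa.
Qed.

Lemma neg_nn (M : M_) : nonneg M -> nonneg (Bneg M).
Proof. by move=> hM a b; rewrite /Bneg mulr_ge0 ?ler0n. Qed.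
Lemma neg_supp (M : M_) : supp (Bneg M).
Proof. by move=> a b /negbTE; rewrite /Bneg => ->; rewrite mul0r. Qed.
Lemma neg_r1 (M : M_) : supp M -> rows1 M -> rows1 (Bneg M).
Proof.
move=> sM hM a; rewrite /Bneg (reindex_inj (can_inj (symdK a))) /=.
transitivity (\sum_(c : St) M a c); last exact: hM.
apply: eq_bigr => c _; rewrite symd_sub.
case ca: (c \subset a); last by rewrite mul0r sM // ca.
rewrite mul1r; congr (M a _); apply/setP => x; rewrite !inE.
case xc: (x \in c); last by case: (x \in a).
by rewrite (fintype.subsetP ca x xc).
Qed.

Lemma union_supp (M N : M_) : supp M -> supp N -> supp (Bunion M N).
Proof.
move=> sM sN a b nb; rewrite /Bunion; apply: big1 => c _; apply: big1 => d _.
case ca: (c \subset a); last by rewrite sM ?ca // mulr0 mul0r.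
case da: (d \subset a); last by rewrite sN ?da // mulr0.
case: eqP => [E|]; last by rewrite !mul0r.
by move: nb; rewrite -E finset.subUset ca da.
Qed.

Lemma mmul_supp (M N : M_) : supp M -> supp N -> supp (mmul M N).
Proof.
move=> sM sN a b nb; rewrite /mmul; apply: big1 => c _.
case ca: (c \subset a); last by rewrite sM ?ca // mul0r.
case bc: (b \subset c); last by rewrite sN ?bc // mulr0.
by move: nb; rewrite (fintype.subset_trans bc ca).
Qed.

Lemma pred_ok t : [/\ nonneg (Bpred R t), rows1 (Bpred R t) & supp (Bpred R t)].
Proof.
elim: t => [||f n|t [n1 r1 s1]|t [n1 r1 s1] u [n2 r2 s2]|t [n1 r1 s1] u [n2 r2 s2]] /=.
- by split; [by move=> ? ?; rewrite /Bfalse ler0n|exact: false_r1|exact: false_supp].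
- by split; [exact: true_nn|exact: true_r1|exact: true_supp].
- by split; [by move=> ? ?; rewrite /Btest ler0n|exact: test_r1|exact: test_supp].
- by split; [exact: neg_nn|exact: neg_r1|exact: neg_supp].
- by split; [exact: union_nn|exact: union_r1|exact: union_supp].
- by split; [exact: mmul_nn|exact: mmul_r1|exact: mmul_supp].
Qed.


Lemma Bpow_ok (M : M_) n : nonneg M -> rows1 M -> nonneg (Bpow M n) /\ rows1 (Bpow M n).
Proof.
move=> nM rM; elim: n => [|n [nP rP]] /=; first by split; [exact: true_nn|exact: true_r1].
split; [apply: union_nn|apply: union_r1]; try exact: true_nn; try exact: true_r1.
  exact: mmul_nn.
exact: mmul_r1.
Qed.

Lemma Bunion_true (N : M_) a b :
  Bunion (Btrue R (F:=F) (V:=V)) N a b = \sum_(d : St) (a :|: d == b)%:R * N a d.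
Proof.
rewrite /Bunion /Btrue /mid (bigD1 a) //= [X in _ + X]big1 ?addr0.
  by apply: eq_bigr => d _; rewrite eqxx mulr1.
move=> c ca; rewrite eq_sym in ca; apply: big1 => d _; rewrite (negbTE ca) mulr0 mul0r //.
Qed.

Section Star.
Variable M : M_.
Hypothesis nM : nonneg M.
Hypothesis rM : rows1 M.

Definition G n (a c : St) := \sum_(b : St) (b \subset c)%:R * Bpow M n a b.

Lemma G0 a c : G 0 a c = (a \subset c)%:R.
Proof.
rewrite /G /= /Btrue /mid (bigD1 a) //= eqxx mulr1 big1 ?addr0 //.
by move=> b ba; rewrite eq_sym (negbTE ba) mulr0.
Qed.

Lemma Grec n a c : G n.+1 a c = (a \subset c)%:R * \sum_(e : St) M a e * G n e c.
Proof.
rewrite /G /=.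
transitivity (\sum_(d : St) (a :|: d \subset c)%:R * mmul M (Bpow M n) a d).
  under eq_bigr do rewrite Bunion_true big_distrr /=.
  rewrite exchange_big /=; apply: eq_bigr => d _.
  rewrite (bigD1 (a :|: d)) //= eqxx mul1r big1 ?addr0 //.
  by move=> b bd; rewrite eq_sym (negbTE bd) mul0r mulr0.
have E d : (a :|: d \subset c)%:R * mmul M (Bpow M n) a d =
   (a \subset c)%:R * ((d \subset c)%:R * mmul M (Bpow M n) a d) :> R.
  by rewrite finset.subUset; case: (a \subset c); case: (d \subset c); rewrite /= ?mul1r ?mul0r.
transitivity (\sum_(d : St) (a \subset c)%:R * ((d \subset c)%:R * mmul M (Bpow M n) a d)).
  by apply: eq_bigr => d _; exact: E.
rewrite -big_distrr /=; congr (_ * _).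
under [RHS]eq_bigr do rewrite big_distrr /=.
rewrite [RHS]exchange_big /=; apply: eq_bigr => d _.
rewrite /mmul big_distrr /=; apply: eq_bigr => e _.
by rewrite mulrCA.
Qed.

Lemma G_ge0 n a c : 0 <= G n a c.
Proof.
have [nP _] := Bpow_ok M n nM rM.
by apply: sumr_ge0 => b _; rewrite mulr_ge0 ?ler0n.
Qed.

Lemma G_le1 n a c : G n a c <= 1.
Proof.
have [nP rP] := Bpow_ok M n nM rM.
rewrite -(rP a); apply: ler_sum => b _.
by case: (b \subset c); rewrite ?mul1r ?mul0r.
Qed.

Lemma G_dec n a c : G n.+1 a c <= G n a c.
Proof.
elim: n a c => [|n IH] a c.
  rewrite Grec G0; rewrite -[X in _ <= X]mulr1; apply: ler_wpM2l; first exact: ler0n.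
  rewrite -(rM a); apply: ler_sum => e _.
  by rewrite -[X in _ <= X]mulr1; apply: ler_wpM2l => //; rewrite G0; case: (_ \subset _).
rewrite Grec [X in _ <= X]Grec; apply: ler_wpM2l; first exact: ler0n.
by apply: ler_sum => e _; apply: ler_wpM2l.
Qed.

Lemma G_cvg a c : cvgn (fun n => G n a c).
Proof.
apply: nonincreasing_is_cvgn.
  by apply/nonincreasing_seqP => n; exact: G_dec.
by exists 0 => _ [n _ <-]; exact: G_ge0.
Qed.

Lemma Bpow_split n a b :
  Bpow M n a b = G n a b - \sum_(c : St | c \proper b) Bpow M n a c.
Proof.
apply/eqP; rewrite eq_sym subr_eq; apply/eqP.
rewrite /G (bigD1 b) //= fintype.subxx mul1r; congr (_ + _).
rewrite [RHS]big_mkcond [LHS]big_mkcond /=; apply: eq_bigr => c _.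
rewrite finset.properEneq andbC.
by case: (c \subset b); case: (c != b); rewrite /= ?mul1r ?mul0r.
Qed.

Lemma Bpow_cvg_k k : forall b : St, (#|b| <= k)%N -> forall a, cvgn (fun n => Bpow M n a b).
Proof.
elim: k => [|k IH] b hb a.
  have -> : (fun n => Bpow M n a b) = (fun n => G n a b).
    apply/funext => n; rewrite Bpow_split big_pred0 ?subr0 // => c.
    apply/negP => /proper_card; rewrite ltnNge.
    by move: hb; rewrite leqn0 => /eqP ->.
  exact: G_cvg.
have -> : (fun n => Bpow M n a b) =
   (fun n => G n a b) - (fun n => \sum_(c : St | c \proper b) Bpow M n a c).
  by apply/funext => n; rewrite Bpow_split.
apply: is_cvgB; first exact: G_cvg.
apply: cvgP; apply: cvg_big => //; first exact: add_continuous.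
move=> c /proper_card cb; apply: (IH c _ a).
by rewrite -ltnS (leq_trans cb hb).
Qed.

Lemma star_nn : nonneg (Bstar M).
Proof.
move=> a b; rewrite /Bstar; apply: limr_ge; first exact: (@Bpow_cvg_k _ b (leqnn _) a).
by apply: nearW => n; have [nP _] := Bpow_ok M n nM rM; exact: nP.
Qed.

Lemma star_r1 : rows1 (Bstar M).
Proof.
move=> a; rewrite /Bstar.
have H : ((\sum_(b : St) Bpow M n a b) @[n --> \oo] --> \sum_(b : St) limn (fun n => Bpow M n a b))%classic.
  apply: cvg_big => //; first exact: add_continuous.
  by move=> b _; exact: (@Bpow_cvg_k _ b (leqnn _) a).
have E : (fun n => \sum_(b : St) Bpow M n a b) = (fun=> 1).
  by apply/funext => n; have [_ rP] := Bpow_ok M n nM rM; exact: rP.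
rewrite E in H; have := cvg_lim (@Rhausdorff R) H; by rewrite lim_cst // => <-.
Qed.

End Star.

End Proofs.

Lemma B_ok (F V : finType) (R : realType) (p : prog F V R) :
  wf p -> @nonneg F V R (B p) /\ @rows1 F V R (B p).
Proof.
elim: p => [t|f n|p IHp q IHq|p IHp q IHq|p IHp r q IHq|p IHp] /=.
- by case: (@pred_ok F V R t).
- by split; [move=> ? ?; rewrite /Bassign ler0n|exact: assign_r1].
- move=> [/IHp[n1 r1] /IHq[n2 r2]].
  by split; [exact: union_nn|exact: union_r1].
- move=> [/IHp[n1 r1] /IHq[n2 r2]].
  by split; [exact: mmul_nn|exact: mmul_r1].
- move=> [hr [/IHp[n1 r1] /IHq[n2 r2]]].
  by split; [exact: choice_nn|exact: choice_r1].
- move=> /IHp[n1 r1].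
  by split; [exact: star_nn|exact: star_r1].
Qed.

Lemma B_ppow (F V : finType) (R : realType) (p : prog F V R) n :
  B (ppow p n) = Bpow (B p) n.
Proof. by elim: n => //= n ->. Qed.

Theorem lemma4p3 (F V : finType) (R : realType) (p : prog F V R) (n : nat)
    (a b b' : {set packet F V}) :
  wf p ->
  \sum_(a' : {set packet F V}) (b' == a' :|: b)%:R * B (ppow p n) a a'
  = \sum_(a' : {set packet F V}) mpow (S p) n.+1 (a, b) (a', b').
Proof.
move=> /B_ok[_ rP]; rewrite B_ppow.
elim: n a b => [|n IH] a b.
  rewrite /= /mid.
  transitivity ((b' == a :|: b)%:R : R).
    rewrite /Btrue /mid (bigD1 a) //= eqxx mulr1 big1 ?addr0 // => c ca.
    by rewrite eq_sym in ca; rewrite (negbTE ca) mulr0.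
  transitivity (\sum_(a' : {set packet F V}) S p (a, b) (a', b')); last first.
    apply: eq_bigr => c _; rewrite /mmul (bigD1 (c, b')) //= eqxx mulr1.
    rewrite big1 ?addr0 // => xy xyn; rewrite (negbTE xyn) mulr0 //.
  by rewrite /S /= -big_distrr /= rP mulr1 finset.setUC.
change (mpow (S p) n.+2) with (mmul (S p) (mpow (S p) n.+1)).

transitivity (\sum_(e : {set packet F V}) B p a e *
   \sum_(d : {set packet F V}) (b' == d :|: (b :|: a))%:R * Bpow (B p) n e d).
  rewrite /=; under eq_bigr do rewrite Bunion_true big_distrr /=.
  rewrite exchange_big /=.
  transitivity (\sum_(d : {set packet F V}) (b' == d :|: (b :|: a))%:R *
                   mmul (B p) (Bpow (B p) n) a d).
    apply: eq_bigr => d _; rewrite (bigD1 (a :|: d)) //= eqxx mul1r.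
    rewrite big1 ?addr0.
      congr (_%:R * _); congr (_ == _); apply/setP => x; rewrite !inE.
      by case: (x \in a); case: (x \in b); case: (x \in d).
    by move=> c cd; rewrite eq_sym in cd; rewrite (negbTE cd) mul0r mulr0.
  rewrite /mmul; under eq_bigr do rewrite big_distrr /=.
  rewrite exchange_big /=; apply: eq_bigr => e _.
  by rewrite big_distrr /=; apply: eq_bigr => d _; rewrite mulrCA.
under eq_bigr do rewrite IH.
rewrite /mmul [RHS]exchange_big /=.
under [RHS]eq_bigr do rewrite -big_distrr /=.
transitivity (\sum_(x : {set packet F V}) \sum_(y : {set packet F V})
   S p (a, b) (x, y) * \sum_(a' : {set packet F V}) mpow (S p) n.+1 (x, y) (a', b'));
  last by rewrite pair_bigA; apply: eq_bigr => -[x y].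
apply: eq_bigr => e _; rewrite [RHS](bigD1 (b :|: a)) //= [X in _ + X]big1 ?addr0.
  by rewrite /S /= eqxx mul1r.
by move=> c cn; rewrite /S /= (negbTE cn) !mul0r.
Qed.
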